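(* Assume the reduced model family is $(\varepsilon,\mu)$-admissible for some $\varepsilon>0$, $\mu\ge1$. Let $u\in V$ with $\operatorname{dist}(u,\mathcal M)\le\varepsilon_{model}$ and $w=P_Wu+\eta$, where $\eta\in W$ and $\|\eta\|\le\varepsilon_{noise}$. Let $u^*=u^*(w)$ be the estimator obtained by surrogate model selection with the surrogate $\mathcal S(v,\mathcal M)=\min_{y\in Y}\mathcal R(v,y)$. Define the alternating minimization sequence as follows: - set $u^0=u^*$ and choose $y^0\in\operatorname{argmin}_{y\in Y}\mathcal R(u^*,y)$; - for $k\ge0$, choose $y^{k+1}\in\operatorname{argmin}_{y\in Y}\mathcal R(u^k,y)$; - for $k\ge0$, let $u^{k+1}$ be the minimizer of $v\mapsto\mathcal R(v,y^{k+1})$ over $v\in w+W^\perp$. Then $\mathcal R(u^{k+1},y^{k+1})\le\mathcal R(u^k,y^k)$ for all $k\ge0$. Moreover, for every $k\ge0$, $$\|u-u^k\|\le\delta_{\kappa\rho}+\varepsilon_{noise},\qquad\rho:=\mu(\varepsilon+\varepsilon_{noise})+(\mu+1)\varepsilon_{model},\quad\kappa=R/r.$$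
   Context: Let $V$ and $Z$ be real Hilbert spaces, with $\|\cdot\|$ the norm of $V$ and $Z'$ the dual of $Z$. Let $Y\subset\mathbb R^d$ be compact. For $y\in Y$ let $A(y):V\to Z'$ be a bounded linear isomorphism and $f(y)\in Z'$, with $y\mapsto A(y)$ and $y\mapsto f(y)$ continuous. Assume there are constants $0<r\le R$ such that $\|A(y)\|_{V\to Z'}\le R$ and $\|A(y)^{-1}\|_{Z'\to V}\le r^{-1}$ for all $y\in Y$. Let $u(y)=A(y)^{-1}f(y)$ and $\mathcal M=\{u(y):y\in Y\}$. Define the residual $\mathcal R(v,y)=\|A(y)v-f(y)\|_{Z'}$. Let $W\subset V$ be a subspace of finite dimension $m$, let $P_W$ be the orthogonal projection onto $W$, and let $W^\perp$ be its orthogonal complement. For $w\in W$ put $V_w=w+W^\perp$. For $\sigma\ge0$ define $\mathcal M_\sigma=\{v:\operatorname{dist}(v,\mathcal M)\le\sigma\}$ and $\delta_\sigma=\sup\{\|u-v\|:u,v\in\mathcal M_\sigma,u-v\in W^\perp\}$. For a finite-dimensional subspace $E$ let $\mu(E,W)=\sup_{v\in E\setminus\{0\}}\|v\|/\|P_Wv\|$, with $\mu(\{0\},W)=1$. A reduced model family consists of: - sets $\mathcal M_1,\dots,\mathcal M_K$ with $\mathcal M=\bigcup_k\mathcal M_k$; - affine spaces $V_k=\bar u_k+\bar V_k$ with $\dim\bar V_k\le m$; - numbers $\varepsilon_k\ge\sup_{u\in\mathcal M_k}\operatorname{dist}(u,V_k)$; - constants $\mu_k=\mu(\bar V_k,W)$.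 The family is $(\varepsilon,\mu)$-admissible if $\varepsilon_k\le\varepsilon$ and $\mu_k\le\mu$ for all $k$. PBDW estimators: $u_k^*(w)=\operatorname{argmin}\{\operatorname{dist}(v,V_k):v\in V_w\}$. Surrogate model selection picks $k^*(w)$ as a minimizer of $k\mapsto\mathcal S(u_k^*(w),\mathcal M)$ and sets $u^*(w)=u^*_{k^*(w)}(w)$. *)

(* Defs.v *)
From mathcomp Require Import all_boot all_order all_algebra all_classical all_reals all_analysis.
Import numFieldNormedType.Exports.
Import Order.TTheory GRing.Theory Num.Theory.
Set Implicit Arguments. Unset Strict Implicit. Unset Printing Implicit Defensive.
Local Open Scope classical_set_scope.
Local Open Scope ring_scope.

Section Defs.
Variables (R : realType) (V : normedModType R).

(* ip is an inner product inducing the norm of V (so a complete V is a real Hilbert space) *)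
Definition is_inner_product (ip : V -> V -> R) : Prop :=
  [/\ (forall x y, ip x y = ip y x),
      (forall (a : R) x y z, ip (a *: x + y) z = a * ip x z + ip y z) &
      (forall x, `|x| = Num.sqrt (ip x x))].

Definition fspan (n : nat) (b : 'I_n -> V) : set V :=
  [set v | exists c : 'I_n -> R, v = \sum_(i < n) c i *: b i].

Definition lin_indep (n : nat) (b : 'I_n -> V) : Prop :=
  forall c : 'I_n -> R, \sum_(i < n) c i *: b i = 0 -> forall i, c i = 0.

Definition orth_compl (ip : V -> V -> R) (W : set V) : set V :=
  [set v | forall x, W x -> ip v x = 0].

Definition is_orth_proj (ip : V -> V -> R) (W : set V) (P : V -> V) : Prop :=
  forall v, W (P v) /\ (forall x, W x -> ip (v - P v) x = 0).

Definition aff_sp (ubar : V) (E : set V) : set V := [set ubar + x | x in E].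

(* distance to a set (extended real: +oo for the empty set) *)
Definition dist_to (v : V) (S : set V) : \bar R :=
  ereal_inf [set (`|v - s|)%:E | s in S].

Definition Msig (M : set V) (sigma : R) : set V :=
  [set v | (dist_to v M <= sigma%:E)%E].

Definition delta_sig (ip : V -> V -> R) (W : set V) (M : set V) (sigma : R) : \bar R :=
  ereal_sup [set e | exists x y, [/\ Msig M sigma x, Msig M sigma y,
                                     orth_compl ip W (x - y) & e = (`|x - y|)%:E]].

Definition mu_ratio (P : V -> V) (E : set V) : \bar R :=
  if `[< E `<=` [set 0] >] then 1%E
  else ereal_sup [set (if P v == 0 then +oo%E else (`|v| / `|P v|)%:E) | v in E `\ 0].
End Defs.

Section Model.
Variables (R : realType) (V Zd : normedModType R) (d : nat).

(* residual R(v,y) = |A(y)v - f(y)|_{Z'} *)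
Definition residual (A : 'rV[R]_d -> V -> Zd) (f : 'rV[R]_d -> Zd) (v : V) (y : 'rV[R]_d) : R :=
  `|A y v - f y|.

(* solution manifold M = { A(y)^{-1} f(y) : y in Y } *)
Definition solset (Y : set 'rV[R]_d) (A : 'rV[R]_d -> V -> Zd) (f : 'rV[R]_d -> Zd) : set V :=
  [set v | exists2 y, Y y & A y v = f y].

Definition surrogate (Y : set 'rV[R]_d) (A : 'rV[R]_d -> V -> Zd) (f : 'rV[R]_d -> Zd) (v : V) : \bar R :=
  ereal_inf [set (residual A f v y)%:E | y in Y].
End Model.

(* Main.v *)
Require Import Defs.
From mathcomp Require Import all_boot all_order all_algebra all_classical all_reals all_analysis.
From mathcomp Require Import ring lra.
Import numFieldNormedType.Exports.
Import Order.TTheory GRing.Theory Num.Theory.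
Local Open Scope classical_set_scope.
Local Open Scope ring_scope.
Set Implicit Arguments. Unset Strict Implicit.

Section IP.
Variables (R : realType) (V : normedModType R) (ip : V -> V -> R).
Hypothesis hip : is_inner_product ip.

Lemma ipC x y : ip x y = ip y x. Proof. by case: hip. Qed.
Lemma ipDl x y z : ip (x + y) z = ip x z + ip y z.
Proof. by case: hip => _ h _; have := h 1 x y z; rewrite scale1r mul1r. Qed.
Lemma ip0l z : ip 0 z = 0.
Proof. have := ipDl 0 0 z; rewrite addr0 => h; lra. Qed.
Lemma ipZl a x z : ip (a *: x) z = a * ip x z.
Proof. by case: hip => _ h _; have := h a x 0 z; rewrite addr0 ip0l addr0. Qed.
Lemma ipNl x z : ip (- x) z = - ip x z.
Proof. by rewrite -scaleN1r ipZl mulN1r. Qed.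
Lemma ipBl x y z : ip (x - y) z = ip x z - ip y z.
Proof. by rewrite ipDl ipNl. Qed.
Lemma ipDr x y z : ip z (x + y) = ip z x + ip z y.
Proof. by rewrite ipC ipDl ipC [ip y z]ipC. Qed.
Lemma ip0r z : ip z 0 = 0.
Proof. by rewrite ipC ip0l. Qed.
Lemma ipZr a x z : ip z (a *: x) = a * ip z x.
Proof. by rewrite ipC ipZl ipC. Qed.
Lemma ipNr x z : ip z (- x) = - ip z x.
Proof. by rewrite ipC ipNl ipC. Qed.
Lemma ipBr x y z : ip z (x - y) = ip z x - ip z y.
Proof. by rewrite ipDr ipNr. Qed.
Lemma ip_suml n (F : 'I_n -> V) z : ip (\sum_(i < n) F i) z = \sum_(i < n) ip (F i) z.
Proof. by rewrite (big_morph (ip^~ z) (fun x y => ipDl x y z) (ip0l z)). Qed.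
Lemma ip_sumr n (F : 'I_n -> V) z : ip z (\sum_(i < n) F i) = \sum_(i < n) ip z (F i).
Proof. by rewrite (big_morph (ip z) (fun x y => ipDr x y z) (ip0r z)). Qed.

Lemma ip_ge0 x : 0 <= ip x x.
Proof.
case: (hip) => _ _ h; case: (leP 0 (ip x x)) => // hlt.
have := h x; rewrite ltr0_sqrtr // => /normr0_eq0 x0.
by move: hlt; rewrite x0 ip0l ltxx.
Qed.
Lemma normE x : `|x| ^+ 2 = ip x x.
Proof. by case: (hip) => _ _ h; rewrite h sqr_sqrtr // ip_ge0. Qed.
Lemma ip_eq0 {x} : ip x x = 0 -> x = 0.
Proof. by move=> h; apply: normr0_eq0; have := normE x; rewrite h => /eqP; rewrite sqrf_eq0 => /eqP. Qed.
Lemma pyth x y : ip x y = 0 -> `|x + y| ^+ 2 = `|x| ^+ 2 + `|y| ^+ 2.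
Proof. by move=> h; rewrite !normE ipDl !ipDr h [ip y x]ipC h addr0 add0r. Qed.

Lemma ortho_sum n (c : 'I_n -> R) (g : 'I_n -> V) x :
  (forall i, ip x (g i) = 0) -> ip x (\sum_(i < n) c i *: g i) = 0.
Proof. by move=> h; rewrite ip_sumr big1 // => i _; rewrite ipZr h mulr0. Qed.

Lemma proj_nat n (g : nat -> V) t : exists c : nat -> R,
  forall i : 'I_n, ip (t - \sum_(k < n) c k *: g k) (g i) = 0.
Proof.
elim: n t => [|n IH] t; first by exists (fun _ => 0) => -[].
have [c' hc'] := IH t; have [d hd] := IH (g n).
set gg := g n - \sum_(k < n) d k *: g k.
have ggo : forall i : 'I_n, ip gg (g i) = 0 by [].
set x0 := t - \sum_(k < n) c' k *: g k.
set lam := if ip gg gg == 0 then 0 else ip x0 gg / ip gg gg.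
exists (fun k : nat => if k == n then lam else c' k - lam * d k).
have -> : \sum_(k < n.+1) (if (k:nat) == n then lam else c' k - lam * d k) *: g k
   = \sum_(k < n) c' k *: g k + lam *: gg.
  rewrite big_ord_recr /= eqxx.
  rewrite (eq_bigr (fun k : 'I_n => c' k *: g k - lam *: (d k *: g k))); last first.
    by move=> k _; rewrite /= ltn_eqF // scalerBl scalerA.
  by rewrite sumrB /gg scalerBr -scaler_sumr; rewrite addrAC addrA.
have hx : t - (\sum_(k < n) c' k *: g k + lam *: gg) = x0 - lam *: gg.
  by rewrite /x0 opprD addrA.
rewrite hx.
have orth : forall i : 'I_n, ip (x0 - lam *: gg) (g i) = 0.
  by move=> i; rewrite ipBl ipZl hc' ggo mulr0 subr0.
move=> i; case: (ltnP i n) => hi.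
  exact: (orth (Ordinal hi)).
have -> : (i : nat) = n by apply/eqP; rewrite eqn_leq hi -ltnS ltn_ord.
have -> : g n = gg + \sum_(k < n) d k *: g k by rewrite /gg subrK.
rewrite ipDr ortho_sum ?addr0; last by move=> k; rewrite orth.
rewrite ipBl ipZl /lam; case: eqP => h.
  by rewrite (ip_eq0 h) ip0r mul0r subr0.
by rewrite divfK ?subrr //; apply/eqP.
Qed.

End IP.
Section Dist.
Variables (R : realType) (V : normedModType R).
Implicit Types (S : set V) (v s : V).

Lemma dist_le S v s : S s -> (dist_to v S <= (`|v - s|)%:E)%E.
Proof. by move=> Ss; apply: ereal_inf_lbound; exists s. Qed.

Lemma dist_ge0 S v : (0 <= dist_to v S)%E.
Proof. by apply: le_ereal_inf_tmp => _ [s _ <-]; rewrite lee_fin. Qed.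

Lemma dist_approx S v x d : (dist_to v S <= x%:E)%E -> 0 < d ->
  exists2 s, S s & `|v - s| < x + d.
Proof.
move=> h d0; have : (dist_to v S < (x + d)%:E)%E.
  by apply: (le_lt_trans h); rewrite lte_fin ltrDl.
by move/ereal_inf_lt => [_ [s Ss <-]]; rewrite lte_fin => hs; exists s.
Qed.

Lemma dist_lim S v x : (forall d, 0 < d -> exists2 s, S s & `|v - s| <= x + d) ->
  (dist_to v S <= x%:E)%E.
Proof.
move=> h; case E: (dist_to v S) => [r| |].
- rewrite lee_fin; apply/ler_addgt0Pr => d d0.
  have [s Ss hs] := h d d0; have := dist_le v Ss; rewrite E lee_fin => h1.
  exact: le_trans h1 hs.
- by have [s Ss _] := h 1 ltr01; have := dist_le v Ss; rewrite E.
- by rewrite leNye.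
Qed.

Lemma dist2_approx S v g tau : (dist_to v S <= g%:E)%E -> 0 <= g -> 0 < tau ->
  exists2 s, S s & `|v - s| ^+ 2 <= g ^+ 2 + tau.
Proof.
move=> h g0 t0.
have k0 : 0 < 2 * g + 1 + tau by lra.
set d := tau / (2 * g + 1 + tau).
have d0 : 0 < d by apply: divr_gt0.
have dk : d * (2 * g + 1 + tau) = tau by rewrite /d divfK // gt_eqF.
have d1 : d <= 1.
  rewrite /d ler_pdivrMr // mul1r; lra.
have [s Ss hs] := dist_approx h d0; exists s => //.
have n0 := normr_ge0 (v - s).
nra.
Qed.
End Dist.
Section Span.
Variables (R : realType) (V : normedModType R).
Lemma fspan_lin {n} {b : 'I_n -> V} a {x y} : fspan b x -> fspan b y -> fspan b (a *: x + y).
Proof.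
move=> [c ->] [d ->]; exists (fun i => a * c i + d i).
rewrite scaler_sumr -big_split /=; apply: eq_bigr => i _.
by rewrite scalerDl scalerA.
Qed.
Lemma fspan0 {n} (b : 'I_n -> V) : fspan b 0.
Proof. by exists (fun _ => 0); rewrite big1 // => i _; rewrite scale0r. Qed.
Lemma fspanD {n} {b : 'I_n -> V} {x y} : fspan b x -> fspan b y -> fspan b (x + y).
Proof. by move=> hx hy; have := fspan_lin 1 hx hy; rewrite scale1r. Qed.
Lemma fspanZ {n} {b : 'I_n -> V} a {x} : fspan b x -> fspan b (a *: x).
Proof. by move=> hx; have := fspan_lin a hx (fspan0 b); rewrite addr0. Qed.
Lemma fspanN {n} {b : 'I_n -> V} {x} : fspan b x -> fspan b (- x).
Proof. by move=> hx; rewrite -scaleN1r; apply: fspanZ. Qed.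
Lemma fspanB {n} {b : 'I_n -> V} {x y} : fspan b x -> fspan b y -> fspan b (x - y).
Proof. by move=> hx hy; apply: fspanD => //; apply: fspanN. Qed.
End Span.

Section Proj.
Variables (R : realType) (V : normedModType R) (ip : V -> V -> R).
Hypothesis hip : is_inner_product ip.
Variables (m : nat) (bW : 'I_m -> V) (P : V -> V).
Hypothesis hP : is_orth_proj ip (fspan bW) P.
Local Notation W := (fspan bW).

Lemma PW v : W (P v). Proof. by case: (hP v). Qed.
Lemma PO v x : W x -> ip (v - P v) x = 0. Proof. by case: (hP v) => _; apply. Qed.

Lemma proj_uniq v y : W y -> (forall x, W x -> ip (v - y) x = 0) -> P v = y.
Proof.
move=> Wy h; apply/eqP; rewrite -subr_eq0; apply/eqP; apply: (ip_eq0 hip).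
have Wd : W (P v - y) by apply: fspanB => //; apply: PW.
have e : P v - y = (v - y) - (v - P v) by rewrite opprB [RHS]addrC addrA subrK.
by rewrite {1}e (ipBl hip) h // PO // subrr.
Qed.

Lemma Plin a x y : P (a *: x + y) = a *: P x + P y.
Proof.
apply: proj_uniq; first by apply: fspan_lin; apply: PW.
move=> z Wz.
have -> : a *: x + y - (a *: P x + P y) = a *: (x - P x) + (y - P y).
  by rewrite scalerBr opprD addrACA.
by rewrite (ipDl hip) (ipZl hip) !PO // mulr0 addr0.
Qed.
Lemma P0 : P 0 = 0.
Proof. by apply: proj_uniq; [apply: fspan0 | move=> x _; rewrite subr0 (ip0l hip)]. Qed.
Lemma PD x y : P (x + y) = P x + P y.
Proof. by have := Plin 1 x y; rewrite !scale1r. Qed.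
Lemma PZ a x : P (a *: x) = a *: P x.
Proof. by have := Plin a x 0; rewrite !addr0 P0 addr0. Qed.
Lemma PN x : P (- x) = - P x.
Proof. by rewrite -scaleN1r PZ scaleN1r. Qed.
Lemma PB x y : P (x - y) = P x - P y.
Proof. by rewrite PD PN. Qed.
Lemma Psum n (F : 'I_n -> V) : P (\sum_(i < n) F i) = \sum_(i < n) P (F i).
Proof. by rewrite (big_morph P PD P0). Qed.
Lemma PWid w : W w -> P w = w.
Proof. by move=> Ww; apply: proj_uniq => // x _; rewrite subrr (ip0l hip). Qed.
Lemma PPorth x y : ip (x - P x) (P y) = 0.
Proof. by apply: PO; apply: PW. Qed.
Lemma pythP x : `|x| ^+ 2 = `|P x| ^+ 2 + `|x - P x| ^+ 2.
Proof.
have e : x = P x + (x - P x) by rewrite addrC subrK.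
by rewrite {1}e (pyth hip) // (ipC hip) PPorth.
Qed.
Lemma normP_le x : `|P x| <= `|x|.
Proof. have := pythP x; have := sqr_ge0 `|x - P x|; have := normr_ge0 (P x); have := normr_ge0 x; nra. Qed.
Lemma normQ_le x : `|x - P x| <= `|x|.
Proof. have := pythP x; have := sqr_ge0 `|P x|; have := normr_ge0 (x - P x); have := normr_ge0 x; nra. Qed.
Lemma Qorth x : ip (x - P x) (P x) = 0. Proof. exact: PPorth. Qed.

Lemma aff_iff w v : W w -> aff_sp w (orth_compl ip W) v <-> P v = w.
Proof.
move=> Ww; split.
  move=> [z hz <-]; rewrite PD PWid //; suff -> : P z = 0 by rewrite addr0.
  by apply: proj_uniq; [apply: fspan0 | move=> x Wx; rewrite subr0; apply: hz].
move=> hv; exists (v - w); last by rewrite addrC subrK.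
by move=> x Wx; rewrite -hv PO.
Qed.


Lemma mu_bound (E : set V) mu e : (mu_ratio P E <= mu%:E)%E -> 1 <= mu -> E e ->
  `|e| <= mu * `|P e|.
Proof.
move=> h hmu Ee; case: (eqVneq e 0) => [->|e0].
  by rewrite normr0 mulr_ge0 // (le_trans ler01 hmu).
move: h; rewrite /mu_ratio; case: asboolP => [sub|_] h.
  by move: e0; rewrite (sub e Ee) eqxx.
have : ((if P e == 0%R then +oo else (`|e| / `|P e|)%:E) <= mu%:E)%E.
  apply: le_trans h; apply: ereal_sup_ubound; exists e => //; split => //.
  by move=> /= e00; move: e0; rewrite e00 eqxx.
case: eqP => hPe //.
by rewrite lee_fin ler_pdivrMr ?normr_gt0 //; apply/eqP.
Qed.

Definition Q x := x - P x.
Lemma QD x y : Q (x + y) = Q x + Q y.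
Proof. by rewrite /Q PD opprD addrACA. Qed.
Lemma QN x : Q (- x) = - Q x.
Proof. by rewrite /Q PN opprB opprK addrC. Qed.
Lemma QB x y : Q (x - y) = Q x - Q y.
Proof. by rewrite QD QN. Qed.
Lemma QW x : W x -> Q x = 0.
Proof. by move=> Wx; rewrite /Q PWid // subrr. Qed.
Lemma pythPQ x : `|x| ^+ 2 = `|P x| ^+ 2 + `|Q x| ^+ 2.
Proof. exact: pythP. Qed.
Lemma QP0 x : P x = 0 -> Q x = x.
Proof. by move=> h; rewrite /Q h subr0. Qed.

End Proj.
Lemma final_ineq (R : realType) (mu X Y pi al be ep : R) : 1 <= mu -> 0 <= X -> 0 <= Y -> 0 <= pi -> 0 <= al -> 0 <= be -> 0 <= ep ->
  X ^+ 2 <= pi ^+ 2 + (Y + be) ^+ 2 -> Y ^+ 2 <= (mu ^+ 2 - 1) * (pi + al) ^+ 2 ->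
  al ^+ 2 + be ^+ 2 <= ep ^+ 2 -> X <= mu * (ep + pi).
Proof.
move=> h1 hX hY hpi hal hbe hep hX2 hY2 hab.
have hm2 : 0 <= mu ^+ 2 - 1 by nra.
set s := Num.sqrt (mu ^+ 2 - 1).
have s2 : s ^+ 2 = mu ^+ 2 - 1 by rewrite sqr_sqrtr.
have s0 : 0 <= s by apply: sqrtr_ge0.
have sm : s <= mu by nra.
have hYs : Y <= s * (pi + al).
  rewrite -s2 -exprMn in hY2; have := mulr_ge0 s0 (addr_ge0 hpi hal).
  move=> h0; rewrite -(ler_pXn2r (_ : 0 < 2)%N) ?nnegrE //.
have hsab : s * al + be <= mu * ep.
  have h2 : (s * al + be) ^+ 2 <= (mu * ep) ^+ 2.
    have : 0 <= (s * be - al) ^+ 2 by apply: sqr_ge0.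
    have : (mu * ep) ^+ 2 = (s ^+ 2 + 1) * ep ^+ 2 by rewrite s2 exprMn; ring.
    nra.
  rewrite -(ler_pXn2r (_ : 0 < 2)%N) ?nnegrE //; nra.
have h3 : X ^+ 2 <= (mu * (ep + pi)) ^+ 2.
  apply: (le_trans hX2).
  have h4 : Y + be <= s * pi + mu * ep by nra.
  have h5 : (Y + be) ^+ 2 <= (s * pi + mu * ep) ^+ 2.
    rewrite (ler_pXn2r (_ : 0 < 2)%N) ?nnegrE //; nra.
  have : (mu * (ep + pi)) ^+ 2 - (pi ^+ 2 + (s * pi + mu * ep) ^+ 2) = 2 * mu * pi * ep * (mu - s).
    have -> : (mu * (ep + pi)) ^+ 2 - (pi ^+ 2 + (s * pi + mu * ep) ^+ 2) = (mu ^+ 2 - 1 - s ^+ 2) * pi ^+ 2 + 2 * mu * pi * ep * (mu - s) by ring.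
    by rewrite s2 subrr mul0r add0r.
  have h6 : 0 <= 2 * mu * pi * ep * (mu - s).
    apply: mulr_ge0; last by lra.
    apply: mulr_ge0 => //; apply: mulr_ge0 => //; apply: mulr_ge0 => //; lra.
  lra.
rewrite -(ler_pXn2r (_ : 0 < 2)%N) ?nnegrE //; nra.
Qed.
Lemma zid1 (V : zmodType) (a b c : V) : a + b + (c - a - b) = c.
Proof. by rewrite -(addrA c) -opprD [LHS]addrC subrK. Qed.

Section Core.
Variables (R : realType) (V : normedModType R) (ip : V -> V -> R).
Hypothesis hip : is_inner_product ip.
Variables (m : nat) (bW : 'I_m -> V) (P : V -> V).
Hypothesis hP : is_orth_proj ip (fspan bW) P.
Local Notation W := (fspan bW).
Local Notation Q := (Q P).

Lemma core n (b : 'I_n -> V) (mu : R) (c0 w us ub a : V) :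
  1 <= mu -> (forall e, fspan b e -> `|e| <= mu * `|P e|) -> W w ->
  aff_sp w (orth_compl ip W) us ->
  (forall v, aff_sp w (orth_compl ip W) v ->
     (dist_to us (aff_sp c0 (fspan b)) <= dist_to v (aff_sp c0 (fspan b)))%E) ->
  aff_sp c0 (fspan b) a ->
  `|us - ub| <= mu * (`|a - ub| + `|w - P ub|).
Proof.
move=> hmu hE Ww hus husmin ha.
set E := fspan b; set VA := aff_sp c0 E.
have Pus : P us = w by apply/(aff_iff hip hP _ Ww).
set t := w - P c0.
pose gb := fun k : nat => oapp b 0 (insub k).
have gbE : forall i : 'I_n, gb i = b i by move=> i; rewrite /gb valK.
have [c hc] := proj_nat hip n (fun k => P (gb k)) t.
set es := \sum_(k < n) c k *: b k.
have Ees : E es by exists (fun k => c k).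
set s := P es.
have sE : s = \sum_(k < n) c k *: P (gb k).
  by rewrite /s /es (Psum hip hP); apply: eq_bigr => k _; rewrite (PZ hip hP) gbE.
have ortho : forall e, E e -> ip (t - s) (P e) = 0.
  move=> e [d ->]; rewrite (Psum hip hP).
  rewrite (eq_bigr (fun k => d k *: P (gb k))); last by move=> k _; rewrite (PZ hip hP) gbE.
  by apply: (ortho_sum hip) => i; rewrite sE; apply: hc.
have Ws : W s by apply: (PW hP).
have Wt : W t by apply: fspanB => //; apply: (PW hP).
have Wts : W (t - s) by apply: fspanB.
have pythS : forall e, E e -> `|t - P e| ^+ 2 = `|t - s| ^+ 2 + `|s - P e| ^+ 2.
  move=> e Ee; have e1 : s - P e = P (es - e) by rewrite (PB hip hP).
  have -> : t - P e = (t - s) + (s - P e) by rewrite addrA subrK.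
  by rewrite (pyth hip) // e1; apply: ortho; apply: fspanB.
set vs := c0 + es; set xs := vs + (t - s).
have Pxs : P xs = w.
  rewrite /xs (PD hip hP vs) (PWid hip hP Wts) /vs (PD hip hP c0 es) -/s /t.
  exact: zid1.
have xsA : aff_sp w (orth_compl ip W) xs by apply/(aff_iff hip hP _ Ww).
set g := `|t - s|.
have VAvs : VA vs by exists es.
have distus : (dist_to us VA <= g%:E)%E.
  apply: le_trans (husmin _ xsA) _; apply: le_trans (dist_le xs VAvs) _.
  by rewrite /xs addrAC subrr add0r.
have key : forall e, E e ->
   `|us - (c0 + e)| ^+ 2 = g ^+ 2 + `|s - P e| ^+ 2 + `|Q (us - (c0 + e))| ^+ 2.
  move=> e Ee; rewrite (pythPQ hip hP) (PB hip hP) (PD hip hP) Pus.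
  have -> : w - (P c0 + P e) = t - P e by rewrite opprD addrA.
  by rewrite pythS.
have hQ : forall x, `|Q x| <= `|x| by move=> x; apply: (normQ_le hip hP).
have vsE : forall e, c0 + e - vs = e - es.
  by move=> e; rewrite /vs opprD addrACA subrr add0r.
have us_xs : us = xs.
  have PD0 : P (us - xs) = 0 by rewrite (PB hip hP) Pus Pxs subrr.
  set D := `|us - xs|.
  have bnd : forall tau, 0 < tau -> D ^+ 2 <= 2 * (1 + mu ^+ 2) * tau.
    move=> tau tau0.
    have [_ [e Ee <-] hz] := dist2_approx distus (normr_ge0 _) tau0.
    rewrite key // in hz.
    set A := `|s - P e| in hz; set B := `|Q (us - (c0 + e))| in hz.
    have hA : A ^+ 2 <= tau by have := sqr_ge0 B; lra.
    have hB : B ^+ 2 <= tau by have := sqr_ge0 A; lra.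
    have e2 : us - xs = ((us - (c0 + e)) + (c0 + e - vs)) - (t - s).
      by rewrite addrA subrK /xs opprD addrA.
    have hD : D <= B + mu * A.
      rewrite /D -(QP0 PD0) e2 (QB hip hP) (QW hip hP Wts) subr0 (QD hip hP).
      apply: (le_trans (ler_normD _ _)); apply: lerD => //.
      apply: (le_trans (hQ _)); rewrite vsE.
      apply: (le_trans (hE _ (fspanB Ee Ees))).
      rewrite (PB hip hP) -/s distrC //.
    have A0 : 0 <= A by apply: normr_ge0.
    have B0 : 0 <= B by apply: normr_ge0.
    have D0 : 0 <= D by apply: normr_ge0.
    have muA : 0 <= mu * A by apply: mulr_ge0 => //; lra.
    have : D ^+ 2 <= (B + mu * A) ^+ 2.
      by rewrite (ler_pXn2r (_ : 0 < 2)%N) ?nnegrE ?addr_ge0.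
    have : 0 <= (B - mu * A) ^+ 2 by apply: sqr_ge0.
    nra.
  apply/eqP; rewrite -subr_eq0; apply/eqP/normr0_eq0; rewrite -/D.
  have D0 : 0 <= D by apply: normr_ge0.
  case: (leP D 0) => [D00|Dpos]; first by apply: le_anti; rewrite D00.
  have k0 : 0 < 1 + mu ^+ 2 by have := sqr_ge0 mu; lra.
  have h1 : 0 < D ^+ 2 by apply: exprn_gt0.
  have tpos : 0 < D ^+ 2 / (4 * (1 + mu ^+ 2)) by apply: divr_gt0 => //; lra.
  have := bnd _ tpos.
  have -> : 2 * (1 + mu ^+ 2) * (D ^+ 2 / (4 * (1 + mu ^+ 2))) = D ^+ 2 / 2.
    by field; rewrite gt_eqF.
  move=> h2; exfalso; lra.
rewrite us_xs.
case: ha => ea Eea <-.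
set p := w - P ub.
have Pxu : P (xs - ub) = p by rewrite (PB hip hP) Pxs.
have e3 : xs - ub = (vs - (c0 + ea)) + (c0 + ea - ub) + (t - s).
  by rewrite (addrA (vs - _)) subrK /xs addrAC.
have Qxu : Q (xs - ub) = Q (vs - (c0 + ea)) + Q (c0 + ea - ub).
  by rewrite e3 (QD hip hP) (QW hip hP Wts) addr0 (QD hip hP).
have e4 : vs - (c0 + ea) = es - ea.
  by rewrite /vs opprD addrACA subrr add0r.
have Ed : E (es - ea) by apply: fspanB.
have Pd : P (es - ea) = s - P ea by rewrite (PB hip hP).
set Y := `|Q (vs - (c0 + ea))|.
set al := `|P (c0 + ea - ub)|; set be := `|Q (c0 + ea - ub)|.
have hY : Y ^+ 2 <= (mu ^+ 2 - 1) * (`|p| + al) ^+ 2.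
  have h1 := pythPQ hip hP (vs - (c0 + ea)).
  rewrite -/Y e4 Pd in h1.
  have h2 : `|es - ea| <= mu * `|s - P ea| by rewrite -Pd; apply: hE.
  have h3 : `|s - P ea| <= `|p| + al.
    have h4 := pythS ea Eea.
    have e5 : t - P ea = p - P (c0 + ea - ub).
      rewrite (PB hip hP) (PD hip hP) /p /t opprB addrA subrK opprD addrA //.
    rewrite e5 in h4.
    have h5 : `|s - P ea| <= `|p - P (c0 + ea - ub)|.
      have := sqr_ge0 g; have := normr_ge0 (s - P ea);
        have := normr_ge0 (p - P (c0 + ea - ub)); nra.
    by apply: (le_trans h5); apply: ler_normB.
  have n1 := normr_ge0 (es - ea); have n2 := normr_ge0 (s - P ea).
  have n3 := normr_ge0 p; have n4 : 0 <= al by apply: normr_ge0.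
  have h6 : `|es - ea| ^+ 2 <= mu ^+ 2 * `|s - P ea| ^+ 2.
    rewrite -exprMn (ler_pXn2r (_ : 0 < 2)%N) ?nnegrE //.
    by apply: mulr_ge0 => //; lra.
  have h7 : `|s - P ea| ^+ 2 <= (`|p| + al) ^+ 2.
    by rewrite (ler_pXn2r (_ : 0 < 2)%N) ?nnegrE //; lra.
  have h8 : 0 <= mu ^+ 2 - 1 by nra.
  nra.
have hX : `|xs - ub| ^+ 2 <= `|p| ^+ 2 + (Y + be) ^+ 2.
  rewrite (pythPQ hip hP) Pxu Qxu lerD2l.
  rewrite (ler_pXn2r (_ : 0 < 2)%N) ?nnegrE ?addr_ge0 //;
    [exact: ler_normD | exact: normr_ge0 | exact: normr_ge0].
have hab : al ^+ 2 + be ^+ 2 <= `|c0 + ea - ub| ^+ 2 by rewrite (pythPQ hip hP).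
apply: (final_ineq hmu (normr_ge0 _) (normr_ge0 _) (normr_ge0 _) (normr_ge0 _) (normr_ge0 _) (normr_ge0 _) hX hY hab).
Qed.
End Core.

Unset Implicit Arguments.

Theorem mainTheorem9
  (R : realType) (V Zd : completeNormedModType R)
  (ipV : V -> V -> R) (ipZ : Zd -> Zd -> R)
  (hipV : is_inner_product ipV) (hipZ : is_inner_product ipZ)
  (d : nat) (Y : set 'rV[R]_d) (hY : compact Y)
  (A : 'rV[R]_d -> V -> Zd) (f : 'rV[R]_d -> Zd) (r Rc : R)
  (hr : 0 < r) (hrR : r <= Rc)
  (hAlin : forall y, Y y -> forall (a : R) (x z : V), A y (a *: x + z) = a *: A y x + A y z)
  (hAbd : forall y, Y y -> forall v, `|A y v| <= Rc * `|v|)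
  (hAinv : forall y, Y y -> exists B : Zd -> V,
      [/\ cancel (A y) B, cancel B (A y) & forall z, `|B z| <= r^-1 * `|z|])
  (hAcont : forall y0, Y y0 -> forall e : R, 0 < e -> exists2 del : R, 0 < del &
      forall y, Y y -> `|y - y0| < del -> forall v, `|A y v - A y0 v| <= e * `|v|)
  (hfcont : {within Y, continuous f})
  (m : nat) (bW : 'I_m -> V) (hbW : lin_indep bW)
  (P : V -> V) (hP : is_orth_proj ipV (fspan bW) P)
  (K : nat) (Mk : 'I_K -> set V) (hMk : solset Y A f = \bigcup_k Mk k)
  (ubar : 'I_K -> V) (nk : 'I_K -> nat) (hnk : forall k, (nk k <= m)%N)
  (bk : forall k : 'I_K, 'I_(nk k) -> V)
  (epsk : 'I_K -> R)
  (hepsk : forall k, (ereal_sup [set e | exists2 x, Mk k x & e = dist_to x (aff_sp (ubar k) (fspan (bk k)))]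
                       <= (epsk k)%:E)%E)
  (eps mu : R) (heps : 0 < eps) (hmu : 1 <= mu)
  (hadm_eps : forall k, epsk k <= eps)
  (hadm_mu : forall k, (mu_ratio P (fspan (bk k)) <= mu%:E)%E)
  (u : V) (eps_model : R) (hu : (dist_to u (solset Y A f) <= eps_model%:E)%E)
  (eta : V) (eps_noise : R) (heta : fspan bW eta) (hetan : `|eta| <= eps_noise)
  (ustar_k : 'I_K -> V)
  (hustar : forall k,
      aff_sp (P u + eta) (orth_compl ipV (fspan bW)) (ustar_k k) /\
      forall v, aff_sp (P u + eta) (orth_compl ipV (fspan bW)) v ->
        (dist_to (ustar_k k) (aff_sp (ubar k) (fspan (bk k)))
         <= dist_to v (aff_sp (ubar k) (fspan (bk k))))%E)
  (kstar : 'I_K)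
  (hkstar : forall j, (surrogate Y A f (ustar_k kstar) <= surrogate Y A f (ustar_k j))%E)
  (ys : nat -> 'rV[R]_d) (us : nat -> V)
  (hu0 : us 0%N = ustar_k kstar)
  (hy0 : Y (ys 0%N) /\
         forall y, Y y -> residual A f (ustar_k kstar) (ys 0%N) <= residual A f (ustar_k kstar) y)
  (hyS : forall k, Y (ys k.+1) /\
         forall y, Y y -> residual A f (us k) (ys k.+1) <= residual A f (us k) y)
  (huS : forall k, aff_sp (P u + eta) (orth_compl ipV (fspan bW)) (us k.+1) /\
         forall v, aff_sp (P u + eta) (orth_compl ipV (fspan bW)) v ->
           residual A f (us k.+1) (ys k.+1) <= residual A f v (ys k.+1)) :
  (forall k, residual A f (us k.+1) (ys k.+1) <= residual A f (us k) (ys k)) /\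
  (forall k, ((`|u - us k|)%:E <=
     delta_sig ipV (fspan bW) (solset Y A f)
       (Rc / r * (mu * (eps + eps_noise) + (mu + 1) * eps_model)) + eps_noise%:E)%E).
Proof.
have Yys : forall k, Y (ys k) by case => [|k]; [exact: hy0.1 | exact: (hyS k).1].
have inA : forall k, aff_sp (P u + eta) (orth_compl ipV (fspan bW)) (us k).
  by case=> [|k]; [rewrite hu0; exact: (hustar kstar).1 | exact: (huS k).1].
have mono : forall k, residual A f (us k.+1) (ys k.+1) <= residual A f (us k) (ys k).
  by move=> k; apply: le_trans ((huS k).2 _ (inA k)) _; apply: (hyS k).2.
split => //.
have mono0 : forall k, residual A f (us k) (ys k) <= residual A f (us 0%N) (ys 0%N).
  by elim => // k IH; exact: le_trans (mono k) IH.
have Alin : forall y, Y y -> forall x z, A y (x - z) = A y x - A y z.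
  move=> y Yy x z; have := hAlin y Yy (-1) z x.
  by rewrite scaleN1r addrC => ->; rewrite scaleN1r addrC.
have Rc0 : 0 < Rc by apply: lt_le_trans hrR.
have en0 : 0 <= eps_noise by apply: le_trans hetan; apply: normr_ge0.
have em0 : 0 <= eps_model.
  by have := le_trans (dist_ge0 _ _) hu; rewrite lee_fin.
set rho := mu * (eps + eps_noise) + (mu + 1) * eps_model.
have WPu : fspan bW (P u + eta) by apply: fspanD => //; apply: (PW hP).
have claim : forall dl, 0 < dl -> residual A f (us 0%N) (ys 0%N) <= Rc * (rho + 2 * mu * dl).
  move=> dl dl0.
  have [ub Mub hub] := dist_approx hu dl0.
  have Mub' := Mub; rewrite hMk in Mub'; case: Mub' => j _ Mjub.
  case: Mub => y Yy Ayub.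
  have hdj : (dist_to ub (aff_sp (ubar j) (fspan (bk j))) <= eps%:E)%E.
    apply: (@le_trans _ _ (epsk j)%:E); last by rewrite lee_fin.
    by apply: le_trans (hepsk j); apply: ereal_sup_ubound; exists ub.
  have [a ha hua] := dist_approx hdj dl0.
  have hc := core hipV hP ub hmu (fun e Ee => mu_bound (hadm_mu j) hmu Ee) WPu
     (hustar j).1 (hustar j).2 ha.
  have h1 : `|P u + eta - P ub| <= eps_model + dl + eps_noise.
    have -> : P u + eta - P ub = P (u - ub) + eta.
      by rewrite (PB hipV hP) addrAC.
    apply: le_trans (ler_normD _ _) _; apply: lerD => //.
    by apply: le_trans (normP_le hipV hP _) _; apply: ltW.
  have h2 : `|ustar_k j - ub| <= rho + 2 * mu * dl.
    apply: le_trans hc _; rewrite distrC.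
    have : `|ub - a| + `|P u + eta - P ub| <= eps + eps_model + eps_noise + 2 * dl.
      by have := ltW hua; lra.
    move=> h3; have h4 : mu * (`|ub - a| + `|P u + eta - P ub|) <= mu * (eps + eps_model + eps_noise + 2 * dl).
      by apply: ler_wpM2l => //; lra.
    apply: le_trans h4 _; rewrite /rho; nra.
  have h5 : residual A f (ustar_k j) y <= Rc * `|ustar_k j - ub|.
    by rewrite /residual -Ayub -Alin //; apply: hAbd.
  have h6 : ((residual A f (us 0%N) (ys 0%N))%:E <= (residual A f (ustar_k j) y)%:E)%E.
    apply: (@le_trans _ _ (surrogate Y A f (ustar_k kstar))); last first.
      by apply: le_trans (hkstar j) _; apply: ereal_inf_lbound; exists y.
    apply: le_ereal_inf_tmp => _ [y' Yy' <-]; rewrite lee_fin hu0.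
    exact: hy0.2.
  rewrite lee_fin in h6; apply: le_trans h6 _; apply: le_trans h5 _.
  by apply: ler_wpM2l => //; apply: ltW.
have Rbnd : residual A f (us 0%N) (ys 0%N) <= Rc * rho.
  apply/ler_addgt0Pr => e e0.
  have dd : 0 < e / (2 * mu * Rc) by apply: divr_gt0 => //; nra.
  have := claim _ dd.
  have -> : Rc * (rho + 2 * mu * (e / (2 * mu * Rc))) = Rc * rho + e.
    by field; apply/andP; split; rewrite gt_eqF //; lra.
  by [].
have ksig : 1 <= Rc / r by rewrite ler_pdivlMr // mul1r.
have rho0 : eps_model + eps_noise <= rho by rewrite /rho; nra.
have sig_ge : rho <= Rc / r * rho.
  have : 0 <= rho by lra.
  nra.
move=> k.
have hx1 : Msig (solset Y A f) (Rc / r * rho) (u + eta).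
  rewrite /Msig; apply: le_trans (_ : _ <= (eps_model + eps_noise)%:E)%E _; last first.
    by rewrite lee_fin; lra.
  apply: dist_lim => dl dl0.
  have [ub Mub hub] := dist_approx hu dl0; exists ub => //.
  have -> : u + eta - ub = (u - ub) + eta by rewrite addrAC.
  by apply: le_trans (ler_normD _ _) _; have := ltW hub; lra.
have hx2 : Msig (solset Y A f) (Rc / r * rho) (us k).
  have [B [AB BA hB]] := hAinv _ (Yys k).
  have Bsub : forall x z, B (x - z) = B x - B z.
    move=> x z; by apply: (can_inj AB); rewrite Alin ?Yys // !BA.
  have Mm : solset Y A f (B (f (ys k))) by exists (ys k) => //; rewrite BA.
  rewrite /Msig /=. apply: le_trans (dist_le _ Mm) _; rewrite lee_fin.
  have -> : us k - B (f (ys k)) = B (A (ys k) (us k) - f (ys k)) by rewrite Bsub AB.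
  apply: le_trans (hB _) _.
  have h1 : `|A (ys k) (us k) - f (ys k)| <= Rc * rho.
    exact: le_trans (mono0 k) Rbnd.
  have -> : Rc / r * rho = r^-1 * (Rc * rho) by rewrite mulrAC mulrC.
  apply: ler_wpM2l => //.
  by rewrite invr_ge0 ltW.
have orth : orth_compl ipV (fspan bW) ((u + eta) - us k).
  case: (inA k) => z hz hzE x Wx; rewrite -hzE.
  have -> : u + eta - (P u + eta + z) = (u - P u) - z.
    by rewrite opprD addrA opprD addrACA subrr addr0.
  by rewrite (ipBl hipV) (PO hP) // hz // subrr.
have hd : ((`|u + eta - us k|)%:E <= delta_sig ipV (fspan bW) (solset Y A f) (Rc / r * rho))%E.
  by apply: ereal_sup_ubound; exists (u + eta), (us k).
apply: le_trans (leeD2r (eps_noise%:E) hd); rewrite -EFinD lee_fin.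
have -> : u - us k = (u + eta - us k) - eta by rewrite addrAC addrK.
by apply: le_trans (ler_normB _ _) _; apply: lerD.
Qed.
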